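(* Let $x=x[1..n]$ be an indeterminate string with prefix table $\pi[1..n]$. Algorithm PCInd (described in the context), run on input $\pi$, outputs exactly the set $\Gamma$ of lengths $\kappa$ of rooted covers of $x$. It runs in $O(n^2)$ time (unit-cost elementary operations) and uses $O(n)$ extra space.
   Context: An indeterminate string $x=x[1..n]$ over an alphabet $\Sigma$ is a sequence of nonempty subsets of $\Sigma$. Two entries match, $x[i]\approx x[j]$, iff $x[i]\cap x[j]\neq\emptyset$; strings $u,w$ match ($u\approx w$) iff $|u|=|w|$ and $u[k]\approx w[k]$ for all $k$. The prefix table of $x$ is the array $\pi[1..n]$ with $\pi[1]=n$ and, for $i\in 2..n$, $\pi[i]$ the largest $\ell\ge0$ with $x[i..i+\ell-1]\approx x[1..\ell]$. A rooted cover of $x$ of length $\kappa$, $1\le\kappa<n$, is one such that every position $k\in 1..n$ lies in some interval $[p,p+\kappa-1]\subseteq[1,n]$ with $x[p..p+\kappa-1]\approx x[1..\kappa]$ (every covering substring matches the prefix of length $\kappa$; in particular the suffix of length $\kappa$ matches $x[1..\kappa]$). Algorithm PCInd (input $\pi[1..n]$, output a set $\Gamma$): Set $\Gamma\leftarrow\emptyset$, $maxlive[1..n]\leftarrow 0$, $max\leftarrow\max(\pi[2..n])$. Let $\mathcal L$ be the list, in increasing order, of the candidate lengths: the values $\pi[i]$ with $2\le i\le n$, $\pi[i]\ge 1$ and $\pi[i]+i-1=n$ (all of which are $\le max$). For $i=2,\dots,n$: set $\mathcal D\leftarrow\emptyset$ (a stack); for each $v\in\mathcal L$ in increasing order: if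 $v>\pi[i]$, stop scanning $\mathcal L$ for this $i$; otherwise let $t\leftarrow i+v-1$; if ($maxlive[v]=0$ and $t\le 2v$) or $maxlive[v]\ge t-v$ then $maxlive[v]\leftarrow t$, else $maxlive[v]\leftarrow-1$ and push $v$ onto $\mathcal D$. After the scan, pop every element of $\mathcal D$ and delete it from $\mathcal L$. Finally, for $k=1,\dots,n$: if $maxlive[k]=n$, add $k$ to $\Gamma$. Output $\Gamma$. *)

(* Defs.v *)
From HB Require Import structures.
From mathcomp Require Import all_boot all_order all_algebra.
Set Implicit Arguments. Unset Strict Implicit. Unset Printing Implicit Defensive.
Import Order.TTheory GRing.Theory Num.Theory.

(** * Indeterminate strings over a finite alphabet [Sigma].
    A string is a [seq {set Sigma}]; positions are 1-based: [xat x i] = x[i]. *)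

Section Strings.
Variable Sigma : finType.
Implicit Types (x : seq {set Sigma}) (a b : {set Sigma}).

Definition indeterminate x : bool := all (fun a => a != set0) x.

Definition xat x (i : nat) : {set Sigma} := nth set0 x i.-1.

Definition imatch a b : bool := a :&: b != set0.

Definition sub_match x (p l : nat) : bool :=
  [forall j : 'I_l, imatch (xat x (p + j)) (xat x (1 + j))].

(** pi[1] = n; for i in 2..n, pi[i] = largest l >= 0 with
    x[i..i+l-1] ~ x[1..l] (the substring must lie inside x, so l <= n-i+1). *)
Definition pi_entry x (i : nat) : nat :=
  if i == 1 then size x
  else \max_(l < (size x - i).+2 | sub_match x i l) l.

(** the prefix table pi[1..n] as a list (entry k-1 holds pi[k]) *)
Definition prefix_table x : seq nat := [seq pi_entry x i | i <- iota 1 (size x)].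

Definition rooted_cover x (kappa : nat) : Prop :=
  (1 <= kappa < size x) /\
  forall k, 1 <= k <= size x ->
    exists p, [/\ 1 <= p, p <= k, k <= p + kappa - 1, p + kappa - 1 <= size x
                & sub_match x p kappa].
End Strings.

(** * Algorithm PCInd, instrumented with a unit-cost operation counter and a
    measure of the extra space used. The input is the table pi as a list
    (entry k-1 = pi[k], n = size of the list). *)

Definition upd (f : nat -> int) (v : nat) (a : int) : nat -> int :=
  fun k => if k == v then a else f k.

Fixpoint pc_scan (i piv : nat) (L : seq nat) (ml : nat -> int) (D : seq nat)
    (cost : nat) : (nat -> int) * seq nat * nat :=
  match L with
  | [::] => (ml, D, cost)
  | v :: L' =>
    if piv < v then (ml, D, cost.+1)
    else
      let t := i + v - 1 in
      if ((ml v == 0%R) && (t <= 2 * v)) || (Posz (t - v) <= ml v)%R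
      then pc_scan i piv L' (upd ml v (Posz t)) D cost.+1
      else pc_scan i piv L' (upd ml v (-1)%R) (v :: D) cost.+1
  end.

(** pop every element of D and delete it from L; deletion is charged
    (conservatively) 1 + |L| operations *)
Fixpoint pc_pop (D L : seq nat) (cost : nat) : seq nat * nat :=
  match D with
  | [::] => (L, cost)
  | v :: D' => pc_pop D' [seq w <- L | w != v] (cost + 1 + size L)
  end.

Fixpoint pc_main (pitab : seq nat) (idx : seq nat) (L : seq nat) (ml : nat -> int)
    (cost peak : nat) : (nat -> int) * nat * nat :=
  match idx with
  | [::] => (ml, cost, peak)
  | i :: idx' =>
    let '(ml', D, c1) := pc_scan i (nth 0 pitab i.-1) L ml [::] cost.+1 in
    let peak' := maxn peak (size L + size D) in
    let '(L', c2) := pc_pop D L c1 in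
    pc_main pitab idx' L' ml' c2 peak'
  end.

Definition pc_candidates (pitab : seq nat) : seq nat :=
  let n := size pitab in
  sort leq [seq nth 0 pitab i.-1 |
            i <- iota 2 n.-1 & (1 <= nth 0 pitab i.-1) && (nth 0 pitab i.-1 + i - 1 == n)].

(** returns (Gamma, number of elementary operations, extra space) ;
    initialisation (maxlive, max, L) is charged 3n, the final loop n;
    extra space = n (maxlive) + peak of |L| + |D| *)
Definition PCInd_run (pitab : seq nat) : seq nat * nat * nat :=
  let n := size pitab in
  let L0 := pc_candidates pitab in
  let '(ml, cost, peak) :=
      pc_main pitab (iota 2 n.-1) L0 (fun _ => 0%R) (3 * n) (size L0) in
  ([seq k <- iota 1 n | ml k == Posz n], cost + n, n + peak).

Definition PCInd (pitab : seq nat) : seq nat := (PCInd_run pitab).1.1.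
Definition PCInd_time (pitab : seq nat) : nat := (PCInd_run pitab).1.2.
Definition PCInd_space (pitab : seq nat) : nat := (PCInd_run pitab).2.

(* Main.v *)
Require Import Defs.
From HB Require Import structures.
From mathcomp Require Import all_boot all_order all_algebra zify.
Set Implicit Arguments. Unset Strict Implicit. Unset Printing Implicit Defensive.

Definition cond (i v : nat) (s : int) : bool :=
  ((s == 0%R) && (i + v - 1 <= 2 * v)) || (Posz (i + v - 1 - v) <= s)%R.
Definition stepv i v (s : int) : int := if cond i v s then Posz (i + v - 1) else (-1)%R.

Lemma scan_spec i piv L : sorted ltn L -> forall ml D cost ml' D' c',
  pc_scan i piv L ml D cost = (ml', D', c') ->
  [/\ forall w, ml' w = if (w \in L) && (w <= piv) then stepv i w (ml w) else ml w,
      D' = rev [seq w <- L | (w <= piv) && ~~ cond i w (ml w)] ++ D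
    & c' <= cost + size L].
Proof.
elim: L => [|v L IH] /= Hs ml D cost ml' D' c'.
  by case=> <- <- <-; split=> //; rewrite addn0.
rewrite (path_sortedE ltn_trans) in Hs; case/andP: Hs => Hall Hs.
have vL : v \notin L by apply/negP => /(allP Hall); rewrite ltnn.
case: ltnP => Hpv.
  case=> <- <- <-; split.
  - move=> w; rewrite in_cons; case: eqP => [->|/= _]; first by rewrite leqNgt Hpv andbF.
    case wL: (w \in L) => //=; have /= Hvw := allP Hall _ wL.
    by rewrite leqNgt (ltn_trans Hpv Hvw).
  - rewrite /=.
    have -> : [seq w <- L | (w <= piv) && ~~ cond i w (ml w)] = [::] => //.
    apply/eqP; rewrite -size_eq0 size_filter -leqn0 leqNgt -has_count; apply/hasPn => w wL.
    have /= Hvw := allP Hall _ wL; rewrite /= leqNgt (ltn_trans Hpv Hvw) //.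
  - by rewrite addnS ltnS leq_addr.
have Hfix : forall a w, w \in L -> upd ml v a w = ml w.
  by move=> a w wL; rewrite /upd; case: eqP => // E; rewrite -E wL in vL.
case Hc: (_ || _) => Hrun; have [H1 H2 H3] := IH Hs _ _ _ _ _ _ Hrun.
- split; last by lia.
  + move=> w; rewrite H1 in_cons; case: (eqVneq w v) => [->|Hwv] /=.
      rewrite (negbTE vL) Hpv /= /upd eqxx /stepv /cond Hc //.
    by rewrite /upd (negbTE Hwv).
  + rewrite H2 /cond Hc /=; congr (rev _ ++ _); apply: eq_in_filter => w wL.
    by rewrite Hfix.
- split; last by lia.
  + move=> w; rewrite H1 in_cons; case: (eqVneq w v) => [->|Hwv] /=.
      rewrite (negbTE vL) Hpv /= /upd eqxx /stepv /cond Hc //.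
    by rewrite /upd (negbTE Hwv).
  + rewrite H2 /cond Hc /= rev_cons cat_rcons; congr (rev _ ++ _).
    by apply: eq_in_filter => w wL; rewrite Hfix.
Qed.

Lemma pop_spec D : forall L c L' c', pc_pop D L c = (L', c') ->
  L' = [seq w <- L | w \notin D] /\ c' <= c + size D * (size L).+1.
Proof.
elim: D => [|v D IH] L c L' c' /=.
  by case=> <- <-; split; [rewrite filter_predT|rewrite addn0].
move=> /IH [-> Hc]; split.
  by rewrite -filter_predI; apply: eq_filter => w; rewrite /= in_cons negb_or andbC.
have Hs : size [seq w <- L | w != v] <= size L by rewrite size_filter count_size.
have H2 : size D * (size [seq w <- L | w != v]).+1 <= size D * (size L).+1.
  by rewrite leq_mul2l ltnS Hs orbT.
move: Hc H2; rewrite mulSn.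
move: (size D * _) (size D * _) => a b; lia.
Qed.

Definition fstep (pitab : seq nat) v (s : int) i :=
  if v <= nth 0 pitab i.-1 then stepv i v s else s.
Definition Fold pitab v idx s := foldl (fstep pitab v) s idx.

Lemma Fold_m1 pitab v idx : Fold pitab v idx (-1)%R = (-1)%R.
Proof.
elim: idx => //= i idx IH; rewrite /fstep; case: ifP => // _.
Qed.

Lemma main_spec pitab N k : forall m L ml cost peak ml' c' pk',
  sorted ltn L -> size L <= N ->
  pc_main pitab (iota m k) L ml cost peak = (ml', c', pk') ->
  [/\ forall w, ml' w = if w \in L then Fold pitab w (iota m k) (ml w) else ml w,
      c' <= cost + N.+1 * size L + k * N.+1
    & pk' <= maxn peak (2 * N)].
Proof.
elim: k => [|k IH] m L ml cost peak ml' c' pk' Hs HN /=.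
  by case=> <- <- <-; split=> [w||]; [by case: ifP|lia|lia].
case E1: pc_scan => [[ml1 D] c1].
case E2: pc_pop => [L1 c2] Hrun.
have [S1 S2 S3] := scan_spec Hs E1.
have [P1 P2] := pop_spec E2.
set Q := (fun w => (w <= nth 0 pitab m.-1) && ~~ cond m w (ml w)) in S2.
rewrite cats0 in S2.
have HL1 : L1 = [seq w <- L | predC Q w].
  rewrite P1 S2; apply: eq_in_filter => w wL.
  by rewrite mem_rev mem_filter wL andbT.
have Hsz : size L1 + size D = size L.
  by rewrite HL1 S2 size_rev !size_filter addnC count_predC.
have Hs1 : sorted ltn L1 by rewrite HL1; apply: sorted_filter => //; apply: ltn_trans.
have HN1 : size L1 <= N by lia.
have [T1 T2 T3] := IH _ _ _ _ _ _ _ _ Hs1 HN1 Hrun.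
split.
- move=> w; rewrite T1 S1.
  case wL: (w \in L) => /=.
    rewrite /fstep; case wL1: (w \in L1); first by [].
    have wD : w \in D by move: wL1; rewrite P1 mem_filter wL andbT => /negbFE.
    move: wD; rewrite S2 mem_rev mem_filter => /andP [/andP [Hp Hc] _].
    by rewrite Hp /stepv (negbTE Hc) Fold_m1.
  have -> : (w \in L1) = false by rewrite P1 mem_filter wL andbF.
  by [].
- apply: (leq_trans T2).
  have HD : size D <= N by lia.
  have : c2 <= c1 + size D * (size L).+1 by [].
  nia.
- apply: (leq_trans T3). have : size D <= size L by lia. lia.
Qed.

Lemma cands_sorted p : sorted ltn (pc_candidates p).
Proof.
rewrite ltn_sorted_uniq_leq sort_uniq (sort_sorted leq_total) andbT.
rewrite map_inj_in_uniq; first by rewrite filter_uniq // iota_uniq.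
move=> i j; rewrite !mem_filter => /andP [/andP [Hi1 /eqP Hi2] _] /andP [/andP [Hj1 /eqP Hj2] _] E.
lia.
Qed.

Lemma cands_size p : size (pc_candidates p) <= size p.
Proof.
rewrite /pc_candidates size_sort size_map size_filter.
apply: leq_trans (count_size _ _) _; rewrite size_iota; lia.
Qed.

Lemma cands_mem p v : v \in pc_candidates p <->
  exists i, [/\ 2 <= i <= size p, 1 <= nth 0 p i.-1, nth 0 p i.-1 + i - 1 = size p
              & v = nth 0 p i.-1].
Proof.
rewrite /pc_candidates mem_sort; split.
  case/mapP => i; rewrite mem_filter mem_iota => /andP [/andP [H1 /eqP H2] H3] ->.
  exists i; split => //; lia.
case=> i [H1 H2 H3 ->]; apply/mapP; exists i => //.
rewrite mem_filter mem_iota H2 H3 eqxx /=; lia.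
Qed.

Lemma run_spec p : let n := size p in
  [/\ forall k, k \in PCInd p <->
        [/\ 1 <= k <= n, k \in pc_candidates p & Fold p k (iota 2 n.-1) 0%R = Posz n],
      PCInd_time p <= 7 * n ^ 2 + 7
    & PCInd_space p <= 7 * n + 7].
Proof.
rewrite /PCInd /PCInd_time /PCInd_space /PCInd_run.
case E: pc_main => [[ml c] pk] /=.
have [M1 M2 M3] := main_spec (cands_sorted p) (cands_size p) E.
have Hs := cands_size p.
split.
- move=> k; rewrite mem_filter mem_iota M1; split.
    case/andP => /eqP H1 H2; case: ifP H1 => Hk H1; first by split => //; lia.
    move: H1 => /eqP; rewrite eq_sym => /eqP [] H0; lia.
  by case=> H1 -> ->; rewrite eqxx /=; lia.
- have H : (size p).-1 * (size p).+1 <= size p * size p by case: (size p) => //= m; nia.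
  have H' : (size p).+1 * size (pc_candidates p) <= (size p).+1 * size p by rewrite leq_mul2l Hs orbT.
  move: M2 H H'; rewrite -mulnn; move: (size p) (size (pc_candidates p)) => N C; nia.
- move: M3; lia.
Qed.

Section S.
Variable Sigma : finType.
Variable x : seq {set Sigma}.
Hypothesis Hind : indeterminate x.
Local Notation n := (size x).

Lemma sub_match_le i l l' : l' <= l -> sub_match x i l -> sub_match x i l'.
Proof.
move=> Hl /forallP H; apply/forallP => j.
have Hj : j < l by apply: leq_trans (ltn_ord j) Hl.
exact: (H (Ordinal Hj)).
Qed.

Lemma sub_match0 i : sub_match x i 0.
Proof. by apply/forallP => -[]. Qed.

Lemma pi_le i v : 2 <= i <= n ->
  (v <= pi_entry x i) = (v <= n - i + 1) && sub_match x i v.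
Proof.
move=> /andP [H2 Hn]; rewrite /pi_entry.
have -> : (i == 1) = false by case: i H2 {Hn} => [|[]].
apply/idP/idP.
- move=> Hv; apply/andP; split.
    apply: (leq_trans Hv); apply/bigmax_leqP => l _; have := ltn_ord l; lia.
  case: v Hv => [|v] Hv; first exact: sub_match0.
  case: (boolP (sub_match x i v.+1)) => // Hns.
  suff : \max_(l < (size x - i).+2 | sub_match x i l) l <= v by lia.
  apply/bigmax_leqP => l Hl; rewrite leqNgt; apply/negP => Hlt.
  by apply: (negP Hns); apply: sub_match_le Hl.
- case/andP => Hv Hs.
  have Hv' : v < (size x - i).+2 by lia.
  exact: (leq_bigmax_cond (F := fun l : 'I__ => nat_of_ord l) (Ordinal Hv') Hs).
Qed.

Lemma sub_match1 v : v <= n -> sub_match x 1 v.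
Proof.
move=> Hv; apply/forallP => j; rewrite /imatch setIid.
rewrite /xat add1n /=.
have Hj : j < n by apply: leq_trans (ltn_ord j) Hv.
by move/allP: Hind => /(_ _ (mem_nth set0 Hj)).
Qed.

Lemma size_pt : size (prefix_table x) = n.
Proof. by rewrite size_map size_iota. Qed.

Lemma pt_nth i : 1 <= i <= n -> nth 0 (prefix_table x) i.-1 = pi_entry x i.
Proof.
move=> Hi; rewrite (nth_map 0); last by rewrite size_iota; lia.
rewrite nth_iota; last by lia.
congr pi_entry; lia.
Qed.


Variable v : nat.
Hypothesis Hv1 : 1 <= v.

Definition occ i := (2 <= i <= n) && (v <= pi_entry x i).
Definition gf m := forall i, 2 <= i < m -> occ i ->
  exists2 p, p < i & (i - p <= v) && ((p == 1) || occ p).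
Definition Inv (s : int) m :=
  [\/ [/\ gf m, (forall i, 2 <= i < m -> ~~ occ i) & s = 0%R],
       gf m /\ exists j, [/\ 2 <= j < m, occ j, (forall i, j < i < m -> ~~ occ i)
                          & s = Posz (j + v - 1)]
     | ~ gf m /\ s = (-1)%R].

Lemma gf_mono m : gf m.+1 -> gf m.
Proof. by move=> H i Hi; apply: H; lia. Qed.

Lemma gf_ext m : gf m -> (occ m -> exists2 p, p < m & (m - p <= v) && ((p == 1) || occ p))
  -> gf m.+1.
Proof.
move=> H Hm i Hi Ho; case: (ltnP i m) => Him; first by apply: H => //; lia.
have -> : i = m by lia.
by apply: Hm; have -> : m = i by lia.
Qed.

Lemma occ_bound i : occ i -> 2 <= i <= n /\ i + v - 1 <= n.
Proof.
case/andP => Hi Hv; split => //.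
rewrite pi_le // in Hv; case/andP: Hv => Hv _; lia.
Qed.

Lemma fold_inv k : k.+1 <= n -> Inv (Fold (prefix_table x) v (iota 2 k) 0) (2 + k).
Proof.
elim: k => [|k IH] Hk.
  by apply: Or31; split => // i Hi; lia.
have {IH} := IH (ltnW Hk).
rewrite -[k.+1]addn1 iotaD /Fold foldl_cat -/(Fold _ _ _ _) /=.
set s := Fold _ _ _ _.
rewrite /fstep pt_nth; last by lia.
have Hocc : occ (2 + k) = (v <= pi_entry x (2 + k)).
  by rewrite /occ; have -> : (2 <= 2 + k <= n) = true by apply/andP; lia.
rewrite -Hocc.
case Ho: (occ (2 + k)); last first.
  have Hg : forall m, m = 2 + k -> gf m -> gf (2 + (k + 1)).
    move=> m -> Hg; rewrite addn1 addnS; apply: gf_ext => //; by rewrite Ho.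
  case=> [[H1 H2 H3]|[H1 [j [J1 J2 J3 J4]]]|[H1 H2]].
  - apply: Or31; split => //; first exact: Hg.
    move=> i Hi; case: (ltnP i (2 + k)) => Hik; first by apply: H2; lia.
    by rewrite (_ : i = 2 + k) ?Ho //; lia.
  - apply: Or32; split; first exact: Hg.
    exists j; split => //; first lia.
    move=> i Hi; case: (ltnP i (2 + k)) => Hik; first by apply: J3; lia.
    by rewrite (_ : i = 2 + k) ?Ho //; lia.
  - apply: Or33; split => // Hg'; apply: H1.
    by apply: gf_mono; rewrite addn1 addnS in Hg'.
have Hb := occ_bound Ho.
case=> [[H1 H2 H3]|[H1 [j [J1 J2 J3 J4]]]|[H1 H2]]; rewrite /stepv.
- rewrite H3 /cond eqxx /=.
  case: ifP => Hc.
  + apply: Or32; split.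
      rewrite addn1 addnS; apply: gf_ext => // _; exists 1; first lia.
      rewrite eqxx andbT; move: Hc; rewrite lez_nat => /orP [] ?; lia.
    exists (2 + k); split => //; [lia|lia].
  + apply: Or33; split => // Hg; move: (Hg (2 + k)) => /(_ _ Ho) [].
      lia.
    move=> p Hp /andP [Hp1 /orP [/eqP Ep|Op]].
      subst p; move/negP: Hc; apply; lia.
    by have := H2 p; rewrite Op; have := occ_bound Op; lia.
- have Hs0 : (s == 0%R) = false by rewrite J4; apply/negP => /eqP [] ; lia.
  rewrite /cond Hs0 /= J4 lez_nat.
  case: ifP => Hc.
  + apply: Or32; split.
      rewrite addn1 addnS; apply: gf_ext => // _; exists j; first lia.
      by rewrite J2 orbT andbT; lia.
    exists (2 + k); split => //; [lia|lia].
  + apply: Or33; split => // Hg; move: (Hg (2 + k)) => /(_ _ Ho) [].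
      lia.
    move=> p Hp /andP [Hp1 /orP [/eqP Ep|Op]].
      subst p; move/negP: Hc; apply; lia.
    case: (ltnP j p) => Hjp.
      by have := J3 p; rewrite Op; lia.
    move/negP: Hc; apply; lia.
- rewrite H2 /cond /=; apply: Or33; split => // Hg; apply: H1.
  by apply: gf_mono; rewrite addn1 addnS in Hg.
Qed.


Lemma occ_sub q : (q == 1) || occ q -> q + v - 1 <= n -> sub_match x q v.
Proof.
case/orP => [/eqP -> Hn|Oq _]; first by apply: sub_match1; lia.
case/andP: Oq => Hq; rewrite pi_le // => /andP [].
by [].
Qed.

Lemma cover_from_gf i0 : gf n.+1 -> occ i0 -> i0 + v - 1 = n -> rooted_cover x v.
Proof.
move=> Hg O0 E0.
have Hb := occ_bound O0.
split; first lia.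
have key : forall q, (q == 1) || occ q -> q + v - 1 <= n -> forall k, 1 <= k <= q + v - 1 ->
   exists p, [/\ 1 <= p, p <= k, k <= p + v - 1, p + v - 1 <= n & sub_match x p v].
  elim/ltn_ind => q IH Hq Hqn k Hk.
  case: (leqP q k) => Hqk.
    exists q; split => //; [|lia|exact: occ_sub].
    by case/orP: Hq => [/eqP ->|/occ_bound]; lia.
  case/orP: Hq => [/eqP Eq|Oq]; first lia.
  have [Hqb _] := occ_bound Oq.
  have [p Hp /andP [Hp1 Hp2]] := Hg q ltac:(lia) Oq.
  apply: (IH p Hp Hp2); last lia.
  by case/orP: Hp2 => [/eqP ->|/occ_bound]; lia.
move=> k Hk; apply: (key i0); [by rewrite O0 orbT|lia|lia].
Qed.

Lemma gf_from_cover : rooted_cover x v -> gf n.+1.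
Proof.
case=> Hv Hc i Hi Oi.
have [Hib _] := occ_bound Oi.
have [p [P1 P2 P3 P4 P5]] := Hc i.-1 ltac:(lia).
exists p; first lia.
apply/andP; split; first lia.
case: (eqVneq p 1) => //= Hp1.
apply/andP; split; first lia.
rewrite pi_le; last lia.
rewrite P5 andbT; lia.
Qed.

End S.

Lemma cover_iff (Sigma : finType) (x : seq {set Sigma}) v : indeterminate x ->
  (v \in pc_candidates (prefix_table x) /\
   Fold (prefix_table x) v (iota 2 (size x).-1) 0%R = Posz (size x)) <-> rooted_cover x v.
Proof.
move=> Hind; split.
  case=> /cands_mem [i [Hi1 Hi2 Hi3 Hi4]] HF.
  rewrite size_pt in Hi1 Hi3; rewrite pt_nth in Hi2 Hi3 Hi4; try lia.
  have Hv1 : 1 <= v by lia.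
  have O0 : occ x v i by rewrite /occ Hi1 -Hi4 leqnn.
  have := fold_inv Hind Hv1 (k := (size x).-1) ltac:(lia).
  rewrite HF => -[[H1 H2 H3]|[H1 [j [J1 J2 J3 J4]]]|[H1 H2]] //.
  - by have := H2 i ltac:(lia); rewrite O0.
  - apply: (cover_from_gf Hind Hv1 (i0 := i)) => //; first by rewrite (_ : (size x).+1 = 2 + (size x).-1) //; lia.
    lia.
move=> Hc; have [Hv Hcov] := Hc.
have Hv1 : 1 <= v by lia.
have [p [P1 P2 P3 P4 P5]] := Hcov (size x) ltac:(lia).
have Hp : 2 <= p <= size x by lia.
have Hpi : pi_entry x p = v.
  apply/eqP; rewrite eqn_leq; apply/andP; split.
    rewrite leqNgt; apply/negP => H; move: H; rewrite pi_le //; lia.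
  by rewrite pi_le // P5 andbT; lia.
have Op : occ x v p by rewrite /occ Hp Hpi leqnn.
split.
  apply/cands_mem; exists p; rewrite size_pt pt_nth //; last lia.
  by rewrite Hpi; split => //; lia.
have Hg := gf_from_cover Hind Hv1 Hc.
have := fold_inv Hind Hv1 (k := (size x).-1) ltac:(lia).
have E : 2 + (size x).-1 = (size x).+1 by lia.
rewrite E => -[[H1 H2 H3]|[H1 [j [J1 J2 J3 J4]]]|[H1 H2]].
- by have := H2 p ltac:(lia); rewrite Op.
- rewrite J4; have [_ Hjb] := occ_bound Hind Hv1 J2.
  case: (ltnP j p) => Hjp; first by have := J3 p ltac:(lia); rewrite Op.
  congr Posz; lia.
- by case: H1.
Qed.


Theorem theorem2 :
  exists c : nat,
  forall (Sigma : finType) (x : seq {set Sigma}),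
    indeterminate x ->
    [/\ (forall kappa : nat, kappa \in PCInd (prefix_table x) <-> rooted_cover x kappa),
        PCInd_time (prefix_table x) <= c * (size x) ^ 2 + c
      & PCInd_space (prefix_table x) <= c * size x + c].
Proof.
exists 7 => Sigma x Hind.
have [R1 R2 R3] := run_spec (prefix_table x).
rewrite /= size_pt in R1 R2 R3.
split => // kappa; rewrite R1 -(cover_iff _ Hind); split.
  by case.
case=> H1 H2; split => //.
have := (cover_iff kappa Hind).1 (conj H1 H2); case; lia.
Qed.
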